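(* Let $(X,d)$ be a sequentially right $K$-complete quasi-pseudometric space and $\varphi:X\to\mathbb{R}\cup\{\infty\}$ a proper, bounded below, nearly lower semicontinuous function. For $x\in X$ let $S(x)=\{y\in X:\varphi(y)+d(y,x)\le\varphi(x)\}$. Then there exists $z\in X$ such that $\varphi(y)=\varphi(z)$ for all $y\in S(z)$. Moreover, for such $z$ and every $y\in S(z)$: (i) $S(y)\subseteq\overline{\{y\}}$, and (ii) $\varphi(y)<\varphi(x)+d(x,y)$ for all $x\in X\setminus S(y)$.
   Context: A quasi-pseudometric on $X$ is $d:X\times X\to[0,\infty)$ with $d(x,x)=0$ and $d(x,z)\le d(x,y)+d(y,z)$ (no symmetry). Topology $\tau_d$: neighbourhood base at $x$ given by $\{y:d(x,y)<r\}$, $r>0$; $x_n\to x$ iff $d(x,x_n)\to0$; $\overline{\{y\}}=\{x:d(x,y)=0\}$. A sequence $(x_n)$ is right $K$-Cauchy if for every $\varepsilon>0$ there is $n_\varepsilon$ with $d(x_{n+k},x_n)<\varepsilon$ for all $n\ge n_\varepsilon$, $k\in\mathbb{N}$; $X$ is sequentially right $K$-complete if every right $K$-Cauchy sequence converges. $\varphi$ proper means $\varphi(x)<\infty$ for some $x$. $\varphi$ is nearly lower semicontinuous if $\varphi(x)\le\liminf_n\varphi(x_n)$ for every sequence with pairwise distinct terms converging to $x$. *)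

(* Defs.v *)
From HB Require Import structures.
From mathcomp Require Import all_boot all_order all_algebra.
From mathcomp Require Import all_classical all_reals.
From mathcomp Require Import sequences.
Set Implicit Arguments. Unset Strict Implicit. Unset Printing Implicit Defensive.
Import Order.TTheory GRing.Theory Num.Theory.
Local Open Scope classical_set_scope.
Local Open Scope ring_scope.

Section QPM.
Variables (R : realType) (X : Type).

Definition quasi_pseudometric (d : X -> X -> R) : Prop :=
  [/\ forall x y, 0 <= d x y,
      forall x, d x x = 0 &
      forall x y z, d x z <= d x y + d y z].

(* convergence in tau_d : x_n -> x iff d(x, x_n) -> 0 *)
Definition qconv (d : X -> X -> R) (u : nat -> X) (x : X) : Prop :=
  forall eps : R, 0 < eps -> exists N : nat, forall n : nat, (N <= n)%N -> d x (u n) < eps.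

Definition right_K_Cauchy (d : X -> X -> R) (u : nat -> X) : Prop :=
  forall eps : R, 0 < eps -> exists N : nat, forall n k : nat, (N <= n)%N -> d (u (n + k)%N) (u n) < eps.

Definition seq_right_K_complete (d : X -> X -> R) : Prop :=
  forall u : nat -> X, right_K_Cauchy d u -> exists x, qconv d u x.

(* closure of a singleton in tau_d *)
Definition qclosure1 (d : X -> X -> R) (y : X) : set X := [set x | d x y = 0].

Definition proper_fun (phi : X -> \bar R) : Prop := exists x, (phi x < +oo)%E.

Definition bounded_below (phi : X -> \bar R) : Prop := exists m : R, forall x, (m%:E <= phi x)%E.

Definition nearly_lsc (d : X -> X -> R) (phi : X -> \bar R) : Prop :=
  forall (u : nat -> X) (x : X),
    (forall n m : nat, n <> m -> u n <> u m) -> qconv d u x ->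
    (phi x <= limn_einf (fun n => phi (u n)))%E.

Definition Sset (d : X -> X -> R) (phi : X -> \bar R) (x : X) : set X :=
  [set y | (phi y + (d y x)%:E <= phi x)%E].

End QPM.

(* Main.v *)
Require Import Defs.
From HB Require Import structures.
From mathcomp Require Import all_boot all_order all_algebra.
From mathcomp Require Import all_classical all_reals.
From mathcomp Require Import sequences.
From mathcomp Require Import ereal topology normedtype lra.
Import Order.TTheory GRing.Theory Num.Theory.
Local Open Scope classical_set_scope.
Local Open Scope ring_scope.

Lemma liminf_le (R : realType) (u : nat -> \bar R) (c : \bar R) (K : nat) :
  (forall k, (K <= k)%N -> (u k <= c)%E) -> (limn_einf u <= c)%E.
Proof.
move=> H; rewrite limn_einf_lim (cvg_lim _ (@cvg_einfs_sup R u)) //.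
apply: ge_ereal_sup => _ [n _ <-] /=.
apply: ge_ereal_inf; exists (u (maxn n K)); first by exists (maxn n K) => //=; rewrite leq_maxl.
by apply: H; rewrite leq_maxr.
Qed.

Lemma small_e {R : realType} {eps : R} : 0 < eps ->
  exists N : nat, forall n, (N <= n)%N -> (n.+1%:R)^-1 < eps.
Proof.
move=> e0; exists (Num.trunc (eps^-1)) => n Nn.
rewrite -(invrK eps) ltf_pV2 ?posrE ?invr_gt0 ?ltr0n //.
apply: (lt_le_trans (truncnS_gt _)); by rewrite ler_nat.
Qed.

Lemma finE {R : realType} {m : R} {v : \bar R} :
  (m%:E <= v)%E -> (v < +oo)%E -> exists a : R, v = a%:E.
Proof. by case: v => // a _ _; exists a. Qed.

Lemma lra1 {R : realType} {D A B E eps : R} :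
  B + D <= A -> A <= B + E -> E < eps -> D < eps.
Proof. lra. Qed.

Lemma lra2 {R : realType} {Dxk Dkn Dxn A B eps : R} :
  Dxk < eps -> B + Dkn <= A -> Dxn <= Dxk + Dkn -> B <= A - Dxn + eps.
Proof. lra. Qed.

Lemma lra3 {R : realType} {b A D : R} : b <= A - D -> b + D <= A.
Proof. lra. Qed.

Lemma lra4 {R : realType} {b c A E : R} : b <= A -> A <= c + E -> b <= c + E.
Proof. lra. Qed.

Lemma lra5 {R : realType} {b c E : R} : E < b - c -> b <= c + E -> False.
Proof. lra. Qed.

Theorem theorem3p2 (R : realType) (X : Type) (d : X -> X -> R) (phi : X -> \bar R) :
  quasi_pseudometric d -> seq_right_K_complete d ->
  proper_fun phi -> bounded_below phi -> nearly_lsc d phi ->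
  (exists z : X, forall y, Sset d phi z y -> phi y = phi z) /\
  (forall z : X, (forall y, Sset d phi z y -> phi y = phi z) ->
     forall y, Sset d phi z y ->
       Sset d phi y `<=` qclosure1 d y /\
       (forall x, ~ Sset d phi y x -> (phi y < phi x + (d x y)%:E)%E)).
Proof.
move=> [d0 dxx tri] compl [x0 px0] [m Hm] nlsc.
have Strans : forall x y w, Sset d phi x y -> Sset d phi y w -> Sset d phi x w.
  move=> x y w; rewrite /Sset /= => Hy Hw.
  apply: le_trans _ (le_trans (leeD2r _ Hw) Hy).
  rewrite -addeA -EFinD; apply: leeD2l; rewrite lee_fin; exact: tri.
have Srefl : forall x, Sset d phi x x by move=> x; rewrite /Sset /= dxx adde0.
have Sle : forall x y, Sset d phi x y -> (phi y <= phi x)%E.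
  by move=> x y h; apply: le_trans h; rewrite leeDl // lee_fin d0.
split; last first.
  move=> z Hz y Syz.
  have zfin : (phi z < +oo)%E.
    rewrite ltNge leye_eq; apply/negP => /eqP pz.
    have := Hz x0; rewrite /Sset /= pz leey => /(_ isT) h.
    by move: px0; rewrite h ltxx.
  have [c pzc] := finE (Hm z) zfin.
  have pyc : phi y = c%:E by rewrite Hz.
  split.
    move=> w Syw; rewrite /qclosure1 /=.
    have pw := Hz w (Strans _ _ _ Syz Syw).
    move: Syw; rewrite /Sset /= pw pyc pzc -EFinD lee_fin => h.
    apply/eqP; rewrite eq_le d0 andbT; lra.
  move=> x nS; rewrite ltNge; apply/negP => h; exact: nS.
apply: contrapT => Hn.
have H : forall z, exists y, Sset d phi z y /\ (phi y < phi z)%E.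
  move=> z; apply: contrapT => Hz; apply: Hn; exists z => y Syz.
  apply: contrapT => ne; apply: Hz; exists y; split => //.
  rewrite lt_neqAle Sle // andbT; exact/eqP.
have step : forall p : nat * X, exists y, (phi p.2 < +oo)%E ->
    Sset d phi p.2 y /\ (phi y < phi p.2)%E /\
    forall w, Sset d phi p.2 w -> (phi y <= phi w + ((p.1.+1%:R)^-1)%:E)%E.
  move=> [n x] /=; have [y2 [S2 lt2]] := H x.
  case: (pselect (phi x < +oo)%E) => xfin; last by exists x.
  set I := ereal_inf (phi @` Sset d phi x).
  have Ilb : (m%:E <= I)%E by apply: le_ereal_inf_tmp => _ [w _ <-]; exact: Hm.
  have Ilt : (I < phi x)%E.
    apply: le_lt_trans lt2; apply: ereal_inf_lbound; by exists y2.
  have [i Ii] := finE Ilb (lt_trans Ilt xfin).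
  have : (I < Order.min (phi x) (i + (n.+1%:R)^-1)%:E)%E.
    by rewrite lt_min Ilt Ii lte_fin ltrDl invr_gt0 ltr0n.
  move=> /ereal_inf_lt [_ [y Sy <-]]; rewrite lt_min => /andP [h1 h2].
  exists y => _; split => //; split => // w Sw.
  apply: (le_trans (ltW h2)); rewrite EFinD leeD2r // -Ii.
  apply: ereal_inf_lbound; by exists w.
have [f Hf] := choice step.
pose u := fix u n := if n is n'.+1 then f (n', u n') else x0.
have uS : forall n, u n.+1 = f (n, u n) by [].
have u0 : u 0%N = x0 by [].
clearbody u.
have ufin : forall n, (phi (u n) < +oo)%E.
  elim=> [|n IH]; first by rewrite u0. rewrite uS; have [_ [h _]] := Hf (n, u n) IH.
  exact: lt_trans h IH.
have uP : forall n, Sset d phi (u n) (u n.+1) /\ (phi (u n.+1) < phi (u n))%E /\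
    forall w, Sset d phi (u n) w -> (phi (u n.+1) <= phi w + ((n.+1%:R)^-1)%:E)%E.
  by move=> n; have := Hf (n, u n) (ufin n); rewrite /= -uS.
have uSk : forall n k, Sset d phi (u n) (u (n + k)%N).
  move=> n; elim=> [|k IH]; first by rewrite addn0.
  rewrite addnS; apply: Strans IH _; by have [] := uP (n + k)%N.
have udec : forall n k, (phi (u (n + k.+1)%N) < phi (u n))%E.
  move=> n; elim=> [|k IH]; first by rewrite addn1; have [_ []] := uP n.
  rewrite addnS; apply: lt_trans IH; by have [_ []] := uP (n + k.+1)%N.
have udist : forall n p, n <> p -> u n <> u p.
  move=> n p np e; case: (ltngtP n p) => h.
  - have := udec n (p - n).-1; rewrite prednK ?subn_gt0 // (subnKC (ltnW h)).
    by rewrite e ltxx.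
  - have := udec p (n - p).-1; rewrite prednK ?subn_gt0 // (subnKC (ltnW h)).
    by rewrite e ltxx.
  - exact: np h.
pose a n := fine (phi (u n)).
have ua : forall n, phi (u n) = (a n)%:E.
  by move=> n; have [b hb] := finE (Hm _) (ufin n); rewrite /a hb.
have RS : forall n k, a (n + k)%N + d (u (n + k)%N) (u n) <= a n.
  by move=> n k; have := uSk n k; rewrite /Sset /= !ua -EFinD lee_fin.
have Rb : forall n k, a n.+1 <= a (n.+1 + k)%N + (n.+1%:R)^-1.
  move=> n k; have [S1 [_ h]] := uP n.
  by have := h _ (Strans _ _ _ S1 (uSk n.+1 k)); rewrite !ua -EFinD lee_fin.
have Cauchy : right_K_Cauchy d u.
  move=> eps e0; have [N HN] := small_e e0; exists N.+1 => n k.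
  case: n => [|n] Nn; first by [].
  exact: (lra1 (RS n.+1 k) (Rb n k) (HN n Nn)).
have [x ux] := compl u Cauchy.
have xS : forall n, Sset d phi (u n) x.
  move=> n; have lsc := nlsc u x udist ux.
  have bnd : forall eps, 0 < eps -> (phi x <= (a n - d x (u n) + eps)%:E)%E.
    move=> eps e0; apply: le_trans lsc _; have [N HN] := ux eps e0.
    apply: (@liminf_le _ _ _ (maxn n N)) => k; rewrite geq_max => /andP[nk Nk].
    rewrite ua lee_fin; have := HN k Nk; have := RS n (k - n)%N.
    rewrite subnKC // => h1 h2; exact: (lra2 h2 h1 (tri x (u k) (u n))).
  have [b pb] := finE (Hm x) (le_lt_trans (bnd 1 ltr01) (ltry _)).
  rewrite /Sset /= pb ua -EFinD lee_fin.
  have : b <= a n - d x (u n).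
    apply/ler_addgt0Pr => e e0; rewrite -lee_fin -pb; exact: bnd.
  exact: lra3.
have [y [Sxy ltyx]] := H x.
have [b pb] := finE (Hm x) (le_lt_trans (Sle _ _ (xS 0%N)) (ufin 0%N)).
have [c pc] := finE (Hm y) (lt_trans ltyx (le_lt_trans (Sle _ _ (xS 0%N)) (ufin 0%N))).
have bc : forall n, b <= c + (n.+1%:R)^-1.
  move=> n; have [_ [_ h]] := uP n.
  have := h _ (Strans _ _ _ (xS n) Sxy); have := Sle _ _ (xS n.+1).
  rewrite pb pc !ua -EFinD !lee_fin => h1 h2; exact: (lra4 h1 h2).
move: ltyx; rewrite pb pc lte_fin => cb.
have bc0 : 0 < b - c by rewrite subr_gt0.
have [N HN] := small_e bc0.
exact: (lra5 (HN N (leqnn N)) (bc N)).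
Qed.
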